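(* Let $k\geq 2$ and $n\geq k$ be integers. In the quasi-shuffle algebra $(\mathcal{H},\ast)$, $$ \sum_{\substack{ r, s_i\geq 1 \\ r+s_1+\cdots +s_{k-1}=n}} z_{r}\ast z_{s_1,\dots, s_{k-1}} = k \sum_{\substack{t_i\geq 1 \\ t_1+\cdots+t_{k}=n}} z_{t_1,\dots, t_{k}} + (n-k+1) \sum_{\substack{u_i\geq 1 \\ u_1+\cdots+u_{k-1}=n }} z_{u_1,\dots, u_{k-1}}. $$
   Context: Let $\mathcal{H}$ be the free $\mathbb{Z}$-module on the free monoid generated by letters $z_s$ ($s\geq 1$ an integer); write $z_{s_1,\dots,s_k}:=z_{s_1}z_{s_2}\cdots z_{s_k}$ for a word and $1$ for the empty word. The quasi-shuffle (stuffle) product $\ast$ is the $\mathbb{Z}$-bilinear product on $\mathcal{H}$ defined on words recursively by $1\ast u=u\ast 1=u$ and $(z_{r}u)\ast(z_{s}v)=z_{r}\,(u\ast (z_{s}v))+z_{s}\,((z_{r}u)\ast v)+z_{r+s}\,(u\ast v)$ for words $u,v$ and integers $r,s\geq 1$ (juxtaposition denotes concatenation, extended linearly). *)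

(* Defs.v *)
From HB Require Import structures.
From mathcomp Require Import all_boot all_order all_algebra.
From mathcomp Require Import freeg.
Set Implicit Arguments. Unset Strict Implicit. Unset Printing Implicit Defensive.
Import Order.TTheory GRing.Theory Num.Theory.
Local Open Scope ring_scope.

(* Words z_{s_1,...,s_k} are represented by the sequence [:: s_1; ...; s_k];
   the empty word is [::].  The letters used in the statement are all >= 1. *)
Definition word := seq nat.

Definition H := {freeg word / int}.

Definition z (w : word) : H := << w >>.

Definition zcons (r : nat) (x : H) : H := fglift (fun w : word => z (r :: w)) x.

Fixpoint stuffle_w (u v : word) {struct u} : H :=
  match u with
  | [::] => z v
  | r :: u' =>
    let fix aux (v : word) : H :=
      match v with
      | [::] => z u
      | s :: v' => zcons r (stuffle_w u' v) + zcons s (aux v')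
                   + zcons (r + s) (stuffle_w u' v')
      end in aux v
  end.

Definition stuffle (x y : H) : H :=
  fglift (fun u : word => fglift (fun v : word => stuffle_w u v) y) x.

Notation "x \ast y" := (stuffle x y) (at level 40, left associativity).

(* Main.v *)
Require Import Defs.
From HB Require Import structures.
From mathcomp Require Import all_boot all_order all_algebra.
From mathcomp Require Import freeg zify.
Import GRing.Theory.
Local Open Scope ring_scope.

HB.instance Definition _ (f : word -> H) :=
  GRing.isZmodMorphism.Build H H (fglift f) (lift_is_additive f).

Lemma fglift_z (f : word -> H) w : fglift f (z w) = f w.
Proof. by rewrite /z liftU scale1r. Qed.

Lemma addf_ext (f g : {additive H -> H}) :
  (forall w, f (z w) = g (z w)) -> forall x, f x = g x.
Proof.
move=> e x; rewrite -(freeg_sumE x) !raddf_sum; apply: eq_bigr => w _.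
have -> : << coeff w x *g w >> = z w *~ coeff w x by rewrite /z freeg_mulz intz.
by rewrite !raddfMz e.
Qed.

Notation S r := (fglift (stuffle_w [:: r])).

Lemma fgliftMz (f : word -> H) x c : fglift f (x *~ c) = fglift f x *~ c.
Proof. exact: raddfMz. Qed.

Lemma fglift_sum (f : word -> H) (I : Type) (s : seq I) (P : pred I) (F : I -> H) :
  fglift f (\sum_(i <- s | P i) F i) = \sum_(i <- s | P i) fglift f (F i).
Proof. exact: raddf_sum. Qed.

Lemma fgliftD (f : word -> H) x y : fglift f (x + y) = fglift f x + fglift f y.
Proof. exact: raddfD. Qed.

Lemma fglift0 (f : word -> H) : fglift f 0 = 0.
Proof. exact: raddf0. Qed.

Lemma fgliftMn (f : word -> H) x n : fglift f (x *+ n) = fglift f x *+ n.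
Proof. exact: raddfMn. Qed.

Lemma zconsz r w : zcons r (z w) = z (r :: w).
Proof. exact: fglift_z. Qed.

Lemma Sz r w : S r (z w) = stuffle_w [:: r] w.
Proof. exact: fglift_z. Qed.

Lemma stuffle_z1 r y : z [:: r] \ast y = S r y.
Proof. by rewrite /stuffle fglift_z. Qed.

Lemma Skey r s x :
  S r (zcons s x) = zcons r (zcons s x) + zcons s (S r x) + zcons (r + s) x.
Proof.
rewrite /zcons -(freeg_sumE x) !fglift_sum -!big_split /=; apply: eq_bigr => w _.
have -> : << coeff w x *g w >> = z w *~ coeff w x by rewrite /z freeg_mulz intz.
rewrite !fgliftMz !fglift_z !zconsz -!mulrzDl; reflexivity.
Qed.

Lemma Dstep (g : nat -> nat -> H) n :
  \sum_(1 <= r < n.+2) \sum_(1 <= s < (n.+1 - r)%N.+1) g r s =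
  \sum_(1 <= r < n.+1) \sum_(1 <= s < (n - r)%N.+1) g r s
  + \sum_(1 <= r < n.+1) g r (n.+1 - r)%N.
Proof.
rewrite big_nat_recr //= [X in _ + X]big_geq ?subnn // addr0 -big_split /=.
apply: eq_big_nat => r /andP[r1 rn].
rewrite subSn; last by lia.
rewrite big_nat_recr //=; congr (_ + g r _); lia.
Qed.

Lemma diagC (h : nat -> H) n :
  \sum_(1 <= r < n.+1) \sum_(1 <= s < (n - r)%N.+1) h (r + s)%N =
  \sum_(1 <= t < n.+1) h t *+ t.-1.
Proof.
elim: n => [|n IH]; first by rewrite !big_geq.
rewrite (Dstep (fun r s => h (r + s)%N)) IH [in RHS]big_nat_recr //=.
congr (_ + _).
rewrite (eq_big_nat _ _ (F2 := fun _ => h n.+1)); last by move=> i /andP[? ?]; congr h; lia.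
by rewrite sumr_const_nat subn1.
Qed.

Lemma triE (g : nat -> nat -> H) n :
  \sum_(1 <= r < n.+1) \sum_(1 <= s < (n - r)%N.+1) g r s =
  \sum_(1 <= s < n.+1) \sum_(1 <= r < (n - s)%N.+1) g r s.
Proof.
elim: n => [|n IH]; first by rewrite !big_geq.
rewrite (Dstep g) (Dstep (fun s r => g r s)) IH; congr (_ + _).
rewrite big_nat_rev /=; apply: eq_big_nat => i /andP[i1 iN].
congr g; lia.
Qed.

Fixpoint F (m n : nat) : H :=
  match m with
  | 0 => if n == 0%N then z [::] else 0
  | m'.+1 => \sum_(1 <= t < n.+1) zcons t (F m' (n - t))
  end.

Lemma zcons0 r : zcons r 0 = 0.
Proof. exact: fglift0. Qed.

Lemma F_small m n : (n < m)%N -> F m n = 0.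
Proof.
elim: m n => [|m IH] n //= hn.
rewrite big_seq big1 // => t; rewrite mem_index_iota => /andP[t1 tn].
rewrite IH ?zcons0 //; lia.
Qed.

Lemma FS m n : F m.+1 n = \sum_(1 <= t < n.+1) zcons t (F m (n - t)).
Proof. by []. Qed.
Lemma F0 n : F 0 n = if n == 0%N then z [::] else 0.
Proof. by []. Qed.

Lemma Lm m n :
  \sum_(1 <= r < n.+1) S r (F m (n - r)) = F m.+1 n *+ m.+1 + F m n *+ (n - m).
Proof.
elim: m n => [|m IH] n.
  rewrite FS subn0 mulr1n.
  have -> : F 0 n *+ n = 0 by case: n => [|n]; rewrite ?mulr0n // F0 mul0rn.
  rewrite addr0; apply: eq_big_nat => r _.
  rewrite F0; case: (_ == 0%N); last by rewrite fglift0 zcons0.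
  by rewrite fglift_z zconsz.
have A : \sum_(1 <= r < n.+1) \sum_(1 <= s < (n - r)%N.+1)
      zcons r (zcons s (F m (n - r - s))) = F m.+2 n.
  rewrite [F m.+2 n]FS; apply: eq_big_nat => r _.
  by rewrite FS /zcons fglift_sum.
have B : \sum_(1 <= r < n.+1) \sum_(1 <= s < (n - r)%N.+1)
      zcons s (S r (F m (n - r - s))) =
    F m.+2 n *+ m.+1 + \sum_(1 <= t < n.+1) zcons t (F m (n - t)) *+ (n - t - m).
  rewrite triE [F m.+2 n]FS -sumrMnl -big_split /=; apply: eq_big_nat => s _.
  under eq_big_nat => r _ do rewrite subnAC.
  by rewrite /zcons -fglift_sum IH fgliftD !fgliftMn.
have C : \sum_(1 <= r < n.+1) \sum_(1 <= s < (n - r)%N.+1)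
      zcons (r + s) (F m (n - r - s)) =
    \sum_(1 <= t < n.+1) zcons t (F m (n - t)) *+ t.-1.
  rewrite -(diagC (fun t => zcons t (F m (n - t)))).
  apply: eq_big_nat => r _; apply: eq_big_nat => s _; by rewrite subnDA.
rewrite (eq_big_nat _ _ (F2 := fun r => \sum_(1 <= s < (n - r)%N.+1)
   (zcons r (zcons s (F m (n - r - s))) + zcons s (S r (F m (n - r - s)))
    + zcons (r + s) (F m (n - r - s))))); last first.
  move=> r _; rewrite FS fglift_sum; apply: eq_big_nat => s _.
  by rewrite Skey.
under eq_big_nat => r _ do rewrite !big_split.
rewrite !big_split A B C.
rewrite (FS m n) -(sumrMnl _ _ _ (n - m.+1)).
set G := F m.+2 n; rewrite /=.
rewrite addrA -mulrS -addrA -big_split /=.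
congr (_ + _); apply: eq_big_nat => t /andP[t1 tn].
rewrite -mulrnDr; have [hm|hm] := leqP m (n - t).
  congr (_ *+ _); lia.
by rewrite F_small // zcons0 !mul0rn.
Qed.

Lemma sum_tupleS (T : finType) m (P : pred (m.+1.-tuple T)) (f : m.+1.-tuple T -> H) :
  \sum_(t | P t) f t =
  \sum_(x : T) \sum_(t : m.-tuple T | P [tuple of x :: t]) f [tuple of x :: t].
Proof.
rewrite pair_big_dep /=.
rewrite (reindex (fun p : T * m.-tuple T => [tuple of p.1 :: p.2])) //=.
exists (fun t => (thead t, [tuple of behead t])) => [[x t]|t] _ /=.
  by congr (_, _); apply: val_inj.
by rewrite [RHS]tuple_eta.
Qed.

Lemma big1cond (f : nat -> H) N :
  \sum_(0 <= i < N | (0 < i)%N) f i = \sum_(1 <= i < N) f i.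
Proof.
case: N => [|N]; first by rewrite !big_geq.
by rewrite big_mkcond big_nat_recl //= add0r big_add1 /=.
Qed.

Lemma Ttuple m N n : (n <= N)%N ->
  \sum_(t : m.-tuple 'I_N.+1 |
        all (fun i : 'I_N.+1 => (0 < i)%N) t && (sumn (map val t) == n))
     z (map val t) = F m n.
Proof.
elim: m n => [|m IH] n hn.
  rewrite big_mkcond (big_pred1 [tuple]) /=; last by move=> t; symmetry; apply/eqP; exact: tuple0.
  by rewrite eq_sym.
rewrite sum_tupleS FS -big1cond big_mkord.
rewrite (@big_ord_widen_cond _ _ _ n.+1 N.+1 (fun i => 0 < i)%N (fun i => zcons i (F m (n - i)))) //.
rewrite [RHS]big_mkcond; apply: eq_bigr => x _.
case: ifP => hx.
  rewrite -(IH (n - x)%N); last by lia.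
  rewrite /zcons fglift_sum; apply: eq_big => [t|t _] /=.
    move: hx => /andP[x0 xn]; rewrite x0 /=; congr (_ && _); apply/eqP/eqP; lia.
  by rewrite fglift_z.
rewrite big_pred0 // => t /=.
apply/negbTE/negP => /andP[/andP[x0 _] /eqP e]; move: hx; rewrite x0 /=; lia.
Qed.

Theorem theorem2p3 (k n : nat) (hk : (2 <= k)%N) (hn : (k <= n)%N) :
  \sum_(r : 'I_n.+1) \sum_(s : k.-1.-tuple 'I_n.+1 |
        [&& (0 < r)%N, all (fun i : 'I_n.+1 => (0 < i)%N) s
          & (r + sumn (map val s))%N == n])
     (z [:: val r] \ast z (map val s))
  =
  (\sum_(t : k.-tuple 'I_n.+1 |
        all (fun i : 'I_n.+1 => (0 < i)%N) t && (sumn (map val t) == n))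
     z (map val t)) *+ k
  + (\sum_(u : k.-1.-tuple 'I_n.+1 |
        all (fun i : 'I_n.+1 => (0 < i)%N) u && (sumn (map val u) == n))
     z (map val u)) *+ (n - k + 1).
Proof.
rewrite !Ttuple //.
have -> : (n - k + 1)%N = (n - k.-1)%N by lia.
transitivity (F k.-1.+1 n *+ k.-1.+1 + F k.-1 n *+ (n - k.-1)); last first.
  by rewrite prednK // ltnW.
rewrite -Lm -big1cond big_mkord [RHS]big_mkcond; apply: eq_bigr => r _.
case: ifP => r0.
  rewrite -(@Ttuple k.-1 n (n - r)%N (leq_subr _ _)) -stuffle_z1.
  rewrite stuffle_z1 fglift_sum; apply: eq_big => [s|s _] /=.
    move: (ltn_ord r) => hr; congr (_ && _); apply/eqP/eqP; lia.
  by rewrite stuffle_z1.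
by rewrite big_pred0.
Qed.
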